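(* Let $X$ be a Banach lattice and let $M$ and $N$ be nonzero Banach sublattices of $X$ such that $X=M\oplus_\infty N$ and the canonical projections from $X$ onto $M$ and onto $N$ are positive operators. Let $Y$ be a strictly monotone Banach lattice. If the pair $(X,Y)$ has the Bishop-Phelps-Bollobás property for positive operators, then $Y$ is uniformly monotone.
   Context: All spaces are real. $X=M\oplus_\infty N$ means every $x\in X$ decomposes uniquely as $x=m+n$ with $m\in M$, $n\in N$, and $\Vert x\Vert=\max\{\Vert m\Vert,\Vert n\Vert\}$. An operator is positive if it maps positive elements to positive elements. A Banach lattice $Y$ is strictly monotone if $x,y\ge0$ and $y\ne0$ imply $\Vert x+y\Vert>\Vert x\Vert$. A Banach lattice $E$ is uniformly monotone if for every $\varepsilon>0$ there is $\delta(\varepsilon)>0$ such that whenever $x\in E$ with $\Vert x\Vert=1$, $y\in E$, $x,y\ge0$, and $\Vert x+y\Vert\le 1+\delta(\varepsilon)$, then $\Vert y\Vert\le\varepsilon$. For a Banach space $X$, $S_X$ is its unit sphere and $L(X,Y)$ the space of bounded operators with operator norm. A pair $(X,Y)$ of Banach lattices has the Bishop-Phelps-Bollobás property for positive operators if for every $0<\varepsilon<1$ there exists $0<\eta(\varepsilon)<\varepsilon$ such that for every positive $S\in S_{L(X,Y)}$ and every $x_0\in S_X$ with $\Vert S(x_0)\Vert>1-\eta(\varepsilon)$, there exist $u_0\in S_X$ and a positive operator $T\in S_{L(X,Y)}$ with $\Vert T(u_0)\Vert=1$, $\Vert u_0-x_0\Vert<\varepsilon$ and $\Vert T-S\Vert<\varepsilon$.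 *)

(* Defs.v *)
From mathcomp Require Import all_boot all_order all_algebra.
From mathcomp Require Import all_classical all_reals all_analysis.
Set Implicit Arguments. Unset Strict Implicit. Unset Printing Implicit Defensive.
Import Order.TTheory GRing.Theory Num.Theory.
Import numFieldNormedType.Exports.
Local Open Scope classical_set_scope.
Local Open Scope ring_scope.

Section Defs.
Context {R : realType}.

Definition is_sup2 {V : Type} (le : V -> V -> Prop) (x y z : V) : Prop :=
  le x z /\ le y z /\ (forall w, le x w -> le y w -> le z w).

Definition is_banach_lattice (V : completeNormedModType R) (le : V -> V -> Prop) : Prop :=
  (forall x, le x x) /\
  (forall x y, le x y -> le y x -> x = y) /\
  (forall x y z, le x y -> le y z -> le x z) /\
  (forall x y z, le x y -> le (x + z) (y + z)) /\
  (forall (a : R) x y, 0 <= a -> le x y -> le (a *: x) (a *: y)) /\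
  (forall x y, exists z, is_sup2 le x y z) /\
  (forall x y ax ay, is_sup2 le x (- x) ax -> is_sup2 le y (- y) ay ->
     le ax ay -> `|x| <= `|y|).

Definition is_banach_sublattice (V : completeNormedModType R) (le : V -> V -> Prop)
  (M : set V) : Prop :=
  [/\ M 0,
      (forall x y, M x -> M y -> M (x + y)),
      (forall (a : R) x, M x -> M (a *: x)),
      (forall x y z, M x -> M y -> is_sup2 le x y z -> M z) &
      closed M].

Definition linfty_direct_sum (V : completeNormedModType R) (M N : set V) : Prop :=
  forall x : V,
    (exists m n, [/\ M m, N n & x = m + n]) /\
    (forall m n m' n', M m -> N n -> M m' -> N n' ->
        x = m + n -> x = m' + n' -> m = m' /\ n = n') /\
    (forall m n, M m -> N n -> x = m + n -> `|x| = Num.max `|m| `|n|).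

Definition positive_projections (V : completeNormedModType R) (le : V -> V -> Prop)
  (M N : set V) : Prop :=
  forall x m n, M m -> N n -> x = m + n -> le 0 x -> le 0 m /\ le 0 n.

Definition strictly_monotone (V : completeNormedModType R) (le : V -> V -> Prop) : Prop :=
  forall x y : V, le 0 x -> le 0 y -> y <> 0 -> `|x| < `|x + y|.

Definition uniformly_monotone (V : completeNormedModType R) (le : V -> V -> Prop) : Prop :=
  forall eps : R, 0 < eps -> exists delta : R, 0 < delta /\
    forall x y : V, `|x| = 1 -> le 0 x -> le 0 y -> `|x + y| <= 1 + delta ->
      `|y| <= eps.

Definition bounded_linear (X Y : completeNormedModType R) (T : X -> Y) : Prop :=
  (forall (a : R) x y, T (a *: x + y) = a *: T x + T y) /\
  (exists k : R, forall x, `|T x| <= k * `|x|).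

Definition opnorm (X Y : completeNormedModType R) (T : X -> Y) : R :=
  sup [set `|T x| | x in [set x : X | `|x| <= 1]].

Definition positive_op (X Y : completeNormedModType R)
  (leX : X -> X -> Prop) (leY : Y -> Y -> Prop) (T : X -> Y) : Prop :=
  forall x, leX 0 x -> leY 0 (T x).

Definition BPBp_positive (X Y : completeNormedModType R)
  (leX : X -> X -> Prop) (leY : Y -> Y -> Prop) : Prop :=
  forall eps : R, 0 < eps < 1 -> exists eta : R, 0 < eta < eps /\
    forall (S : X -> Y) (x0 : X),
      bounded_linear S -> positive_op leX leY S -> opnorm S = 1 ->
      `|x0| = 1 -> 1 - eta < `|S x0| ->
      exists (u0 : X) (T : X -> Y),
        `|u0| = 1 /\ bounded_linear T /\ positive_op leX leY T /\
        opnorm T = 1 /\ `|T u0| = 1 /\ `|u0 - x0| < eps /\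
        opnorm (fun x => T x - S x) < eps.

End Defs.

(* Main.v *)
Require Import Defs.
From mathcomp Require Import all_boot all_order all_algebra.
From mathcomp Require Import all_classical all_reals all_analysis.
From mathcomp Require Import ring lra.
Import Order.TTheory GRing.Theory Num.Theory.
Import numFieldNormedType.Exports.
Set Implicit Arguments. Unset Strict Implicit. Unset Printing Implicit Defensive.
Local Open Scope classical_set_scope.
Local Open Scope ring_scope.

Section Lat.
Variables (R : realType) (V : completeNormedModType R) (le : V -> V -> Prop).
Hypothesis HL : is_banach_lattice le.

Lemma lrefl x : le x x. Proof. by case: HL. Qed.
Lemma lanti x y : le x y -> le y x -> x = y.
Proof. by case: HL => _ [h _]; apply: h. Qed.
Lemma ltrans x y z : le x y -> le y z -> le x z.
Proof. by case: HL => _ [_ [h _]]; apply: h. Qed.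
Lemma laddr x y z : le x y -> le (x + z) (y + z).
Proof. by case: HL => _ [_ [_ [h _]]]; apply: h. Qed.
Lemma lscale (a : R) x y : 0 <= a -> le x y -> le (a *: x) (a *: y).
Proof. by case: HL => _ [_ [_ [_ [h _]]]]; apply: h. Qed.
Lemma lsupex x y : exists z, is_sup2 le x y z.
Proof. by case: HL => _ [_ [_ [_ [_ [h _]]]]]; apply: h. Qed.
Lemma lnorm x y ax ay : is_sup2 le x (- x) ax -> is_sup2 le y (- y) ay ->
     le ax ay -> `|x| <= `|y|.
Proof. by case: HL => _ [_ [_ [_ [_ [_ h]]]]]; apply: h. Qed.

Lemma le_sub0 x y : le x y -> le 0 (y - x).
Proof. by move/(laddr (- x)); rewrite subrr. Qed.
Lemma le_0sub x y : le 0 (y - x) -> le x y.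
Proof. by move/(laddr x); rewrite add0r subrK. Qed.
Lemma le_add a b c d : le a b -> le c d -> le (a + c) (b + d).
Proof.
move=> h1 h2; apply: ltrans (laddr c h1) _.
by rewrite (addrC b) (addrC b); apply: laddr.
Qed.
Lemma le_opp x y : le x y -> le (- y) (- x).
Proof.
move=> h; apply: le_0sub; rewrite opprK addrC; exact: le_sub0.
Qed.
Lemma le_addpos a c : le 0 c -> le a (a + c).
Proof. by move=> h; have := le_add (lrefl a) h; rewrite addr0. Qed.
Lemma le_scale0 (t : R) x : 0 <= t -> le 0 x -> le 0 (t *: x).
Proof. by move=> t0 h; have := lscale t0 h; rewrite scaler0. Qed.
Lemma sup_uniq x y a b : is_sup2 le x y a -> is_sup2 le x y b -> a = b.
Proof.
move=> [ha1 [ha2 ha3]] [hb1 [hb2 hb3]]; apply: lanti; [exact: ha3|exact: hb3].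
Qed.

Definition absv x := proj1_sig (cid (lsupex x (- x))).
Lemma absv_sup x : is_sup2 le x (- x) (absv x).
Proof. exact: proj2_sig (cid (lsupex x (- x))). Qed.
Lemma absv_ge x : le x (absv x). Proof. by case: (absv_sup x). Qed.
Lemma absv_geN x : le (- x) (absv x). Proof. by case: (absv_sup x) => _ []. Qed.
Lemma absv_least x w : le x w -> le (- x) w -> le (absv x) w.
Proof. by case: (absv_sup x) => _ [_ h]; apply: h. Qed.
Lemma absv_ge0 x : le 0 (absv x).
Proof.
have h := le_add (absv_ge x) (absv_geN x); rewrite subrr in h.
have h2 : (0:R) <= 2^-1 by rewrite invr_ge0 ler0n.
have := le_scale0 h2 h.
rewrite scalerDr -scalerDl.
have -> : (2^-1 + 2^-1 : R) = 1 by field.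
by rewrite scale1r.
Qed.
Lemma sup_pos x : le 0 x -> is_sup2 le x (- x) x.
Proof.
move=> h; split; first exact: lrefl; split; last by [].
by apply: ltrans (le_opp h) _; rewrite oppr0.
Qed.
Lemma norm_mono x y : le 0 x -> le x y -> `|x| <= `|y|.
Proof.
move=> h1 h2; apply: (lnorm (sup_pos h1) (sup_pos (ltrans h1 h2)) h2).
Qed.
Lemma norm_absv x : `|absv x| = `|x|.
Proof.
apply/eqP; rewrite eq_le; apply/andP; split.
- exact: (lnorm (sup_pos (absv_ge0 x)) (absv_sup x) (lrefl _)).
- exact: (lnorm (absv_sup x) (sup_pos (absv_ge0 x)) (lrefl _)).
Qed.
Lemma norm_le_abs x w : le x w -> le (- x) w -> `|x| <= `|w|.
Proof.
move=> h1 h2; rewrite -norm_absv; apply: norm_mono; first exact: absv_ge0.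
exact: absv_least.
Qed.

Definition posp x := proj1_sig (cid (lsupex x 0)).
Lemma posp_sup x : is_sup2 le x 0 (posp x).
Proof. exact: proj2_sig (cid (lsupex x 0)). Qed.
Lemma posp_ge0 x : le 0 (posp x). Proof. by case: (posp_sup x) => _ []. Qed.
Lemma posp_pos x : le 0 x -> posp x = x.
Proof.
move=> h; apply: sup_uniq (posp_sup x) _; split; first exact: lrefl.
by split => // w.
Qed.
Lemma posp_neg x : le x 0 -> posp x = 0.
Proof.
move=> h; apply: sup_uniq (posp_sup x) _; split => //; split; first exact: lrefl.
by [].
Qed.
Lemma posp_add x y : le (posp (x + y)) (posp x + posp y).
Proof.
case: (posp_sup (x + y)) => _ [_ h]; apply: h.
  by apply: le_add; case: (posp_sup x); case: (posp_sup y).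
by rewrite -[0](addr0 0); apply: le_add; apply: posp_ge0.
Qed.
Lemma posp_scale (t : R) x : 0 < t -> posp (t *: x) = t *: posp x.
Proof.
move=> tp; apply: sup_uniq (posp_sup _) _.
split; first by apply: lscale (ltW tp) _; case: (posp_sup x).
split; first exact: le_scale0 (ltW tp) (posp_ge0 x).
move=> w h1 h2.
have tip : 0 < t^-1 by rewrite invr_gt0.
have e : w = t *: (t^-1 *: w) by rewrite scalerA divff ?gt_eqF // scale1r.
rewrite e; apply: lscale (ltW tp) _.
case: (posp_sup x) => _ [_ h]; apply: h.
  by have := lscale (ltW tip) h1; rewrite scalerA mulVf ?gt_eqF // scale1r.
exact: le_scale0 (ltW tip) h2.
Qed.
Lemma posp_le_absv x : le (posp x) (absv x).
Proof.
case: (posp_sup x) => _ [_ h]; apply: h; [exact: absv_ge|exact: absv_ge0].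
Qed.

Definition pn x := `|posp x|.
Lemma pn_sub x y : pn (x + y) <= pn x + pn y.
Proof.
apply: le_trans (ler_normD _ _); apply: norm_mono; first exact: posp_ge0.
exact: posp_add.
Qed.
Lemma pn_hom t x : 0 < t -> pn (t *: x) = t * pn x.
Proof. by move=> tp; rewrite /pn posp_scale // normrZ gtr0_norm. Qed.
Lemma pn_le x : pn x <= `|x|.
Proof.
rewrite -norm_absv; apply: norm_mono; [exact: posp_ge0|exact: posp_le_absv].
Qed.

Lemma le_comb a b (al be : R) : le 0 a -> le 0 b -> `|al| <= 1 -> `|be| <= 1 ->
  le (al *: a + be *: b) (a + b).
Proof.
move=> ha hb hal hbe; apply: le_0sub.
have -> : a + b - (al *: a + be *: b) = (1 - al) *: a + (1 - be) *: b.
  by rewrite !scalerBl !scale1r opprD addrACA.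
rewrite -[0](addr0 0); apply: le_add; apply: le_scale0 => //.
  by move: hal; rewrite ler_norml => /andP [_ h]; rewrite subr_ge0.
by move: hbe; rewrite ler_norml => /andP [_ h]; rewrite subr_ge0.
Qed.
Lemma bound2 a b (al be : R) : le 0 a -> le 0 b -> `|al| <= 1 -> `|be| <= 1 ->
  `|al *: a + be *: b| <= `|a + b|.
Proof.
move=> ha hb hal hbe; apply: norm_le_abs; first exact: le_comb.
rewrite opprD -!scaleNr; apply: le_comb => //; by rewrite normrN.
Qed.
End Lat.

Section Func.
Variables (R : realType) (V : completeNormedModType R) (le : V -> V -> Prop).
Hypothesis HL : is_banach_lattice le.
Variable f : V -> R.
Hypothesis fl : forall a x y, f (a *: x + y) = a * f x + f y.
Hypothesis fle : forall x, f x <= pn HL x.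

Lemma func0 : f 0 = 0.
Proof. have := fl 1 0 0; rewrite scaler0 addr0 mul1r; lra. Qed.
Lemma funcZ a x : f (a *: x) = a * f x.
Proof. by have := fl a x 0; rewrite addr0 func0 addr0. Qed.
Lemma funcD x y : f (x + y) = f x + f y.
Proof. by have := fl 1 x y; rewrite scale1r mul1r. Qed.
Lemma funcN x : f (- x) = - f x.
Proof. by rewrite -scaleN1r funcZ mulN1r. Qed.
Lemma func_pos x : le 0 x -> 0 <= f x.
Proof.
move=> h; have := fle (- x); rewrite funcN /pn posp_neg ?normr0 ?oppr_le0 //.
by have := le_opp HL h; rewrite oppr0.
Qed.
Lemma func_bd x : `|f x| <= `|x|.
Proof.
rewrite ler_norml; apply/andP; split.
  rewrite lerNl -funcN -(normrN x); exact: le_trans (fle _) (pn_le _ _).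
exact: le_trans (fle _) (pn_le _ _).
Qed.
End Func.

Section Ops.
Variables (R : realType) (X Y : completeNormedModType R) (U : X -> Y).
Hypothesis HU : bounded_linear U.
Lemma linD x y : U (x + y) = U x + U y.
Proof. by case: HU => h _; have := h 1 x y; rewrite !scale1r. Qed.
Lemma lin0 : U 0 = 0.
Proof. have e := linD 0 0; rewrite addr0 in e; apply: (addrI (U 0)); by rewrite addr0 -e. Qed.
Lemma linZ a x : U (a *: x) = a *: U x.
Proof. by case: HU => h _; have := h a x 0; rewrite !addr0 lin0 addr0. Qed.
Lemma linN x : U (- x) = - U x.
Proof. by rewrite -scaleN1r linZ scaleN1r. Qed.
Lemma linB x y : U (x - y) = U x - U y.
Proof. by rewrite linD linN. Qed.
Lemma opnorm_ub z : `|z| <= 1 -> `|U z| <= opnorm U.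
Proof.
move=> hz; apply: ub_le_sup; last by exists z.
case: HU => _ [k hk]; exists `|k| => _ [z' hz' <-].
apply: le_trans (hk z') _.
have hz2 : `|z'| <= 1 := hz'.
have := ler_norm k; have := normr_ge0 k; have := normr_ge0 z'; nra.
Qed.
End Ops.

Section Sum.
Variables (R : realType) (X : completeNormedModType R) (le : X -> X -> Prop) (M : set X).
Hypothesis HM : is_banach_sublattice le M.
Lemma subM0 : M 0. Proof. by case: HM. Qed.
Lemma subMD x y : M x -> M y -> M (x + y). Proof. by case: HM => _ h _ _ _; apply: h. Qed.
Lemma subMZ a x : M x -> M (a *: x). Proof. by case: HM => _ _ h _ _; apply: h. Qed.
Lemma subMN x : M x -> M (- x). Proof. by move=> h; rewrite -scaleN1r; apply: subMZ. Qed.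
Lemma subMB x y : M x -> M y -> M (x - y). Proof. by move=> h1 h2; apply: subMD h1 (subMN h2). Qed.
Lemma sub_absv (HL : is_banach_lattice le) x : M x -> M (absv HL x).
Proof. move=> h; case: HM => _ _ _ hs _; exact: hs _ _ _ h (subMN h) (absv_sup HL x). Qed.
End Sum.

Section Dec.
Variables (R : realType) (X : completeNormedModType R) (M N : set X).
Hypothesis LD : linfty_direct_sum M N.
Lemma dec_ex x : exists mn : X * X, [/\ M mn.1, N mn.2 & x = mn.1 + mn.2].
Proof. by case: (LD x) => [[m [n [hm hn e]]] _]; exists (m, n). Qed.
Definition dec x := proj1_sig (cid (dec_ex x)).
Definition PM x := (dec x).1.
Definition PN x := (dec x).2.
Lemma dec_spec x : [/\ M (PM x), N (PN x) & x = PM x + PN x].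
Proof. exact: proj2_sig (cid (dec_ex x)). Qed.
Lemma dec_uniq x m n : M m -> N n -> x = m + n -> PM x = m /\ PN x = n.
Proof.
move=> hm hn e; case: (dec_spec x) => h1 h2 e2.
by case: (LD x) => _ [h _]; apply: h.
Qed.
Lemma dec_norm m n : M m -> N n -> `|m + n| = Num.max `|m| `|n|.
Proof. by move=> hm hn; case: (LD (m + n)) => _ [_ h]; apply: h. Qed.
Lemma norm_dec x : `|x| = Num.max `|PM x| `|PN x|.
Proof. by case: (dec_spec x) => h1 h2 e; rewrite {1}e dec_norm. Qed.
Lemma PM_le x : `|PM x| <= `|x|.
Proof. by rewrite [X in _ <= X]norm_dec le_max lexx. Qed.
Lemma PN_le x : `|PN x| <= `|x|.
Proof. by rewrite [X in _ <= X]norm_dec le_max lexx orbT. Qed.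
End Dec.

Lemma PM_lin (R : realType) (X : completeNormedModType R) (le : X -> X -> Prop) (M N : set X)
  (HM : is_banach_sublattice le M) (HN : is_banach_sublattice le N) (LD : linfty_direct_sum M N) a x y :
  PM LD (a *: x + y) = a *: PM LD x + PM LD y /\ PN LD (a *: x + y) = a *: PN LD x + PN LD y.
Proof.
case: (dec_spec LD x) => hx1 hx2 ex; case: (dec_spec LD y) => hy1 hy2 ey.
apply: dec_uniq.
- have h1 := subMZ HM a hx1; have h2 := subMD HM h1 hy1; exact: h2.
- have h1 := subMZ HN a hx2; have h2 := subMD HN h1 hy2; exact: h2.
by rewrite {1}ex {1}ey scalerDr addrACA.
Qed.

Section HB.
Variables (R : realType) (V : lmodType R) (p : V -> R) (x0 : V).
Hypothesis psub : forall x y, p (x + y) <= p x + p y.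
Hypothesis phom : forall t x, 0 < t -> p (t *: x) = t * p x.
Hypothesis px0 : forall t, t <= p (t *: x0).

Definition good (G : set (V * R)) :=
  [/\ G (x0, 1),
   (forall a x r y s, G (x, r) -> G (y, s) -> G (a *: x + y, a * r + s)),
   (forall x r s, G (x, r) -> G (x, s) -> r = s) &
   (forall x r, G (x, r) -> r <= p x)].

Lemma good0 {G} : good G -> G (0, 0).
Proof.
case=> G1 Gc _ _; have := Gc (-1) _ _ _ _ G1 G1.
by rewrite scaleN1r addNr mulN1r addNr.
Qed.

Lemma goodZ {G} a x r : good G -> G (x, r) -> G (a *: x, a * r).
Proof.
move=> gG Gx; case: (gG) => _ Gc _ _; have := Gc a _ _ _ _ Gx (good0 gG).
by rewrite addr0 addr0.
Qed.

Lemma zmod_aux (U : zmodType) (a b c d : U) : a + b = c + d -> b - d = c - a.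
Proof.
move=> e; apply/eqP; rewrite subr_eq -addrA (addrC (-a)) addrA -e.
by rewrite addrC addrA addNr add0r.
Qed.

Lemma hahn_banach : exists f : V -> R,
  [/\ forall a x y, f (a *: x + y) = a * f x + f y,
      forall x, f x <= p x & f x0 = 1].
Proof.
pose P G := G = set0 \/ good G.
have [A [PA Amax]] : exists A, P A /\ (forall B, A `<` B -> ~ P B).
  apply: Zorn_bigcup; move=> F FP Ftot.
  case: (pselect (exists X, F X /\ X !=set0)) => [[X0 [FX0 [z0 Xz0]]]|nE]; last first.
    left; apply/seteqP; split => // w [Y FY Yw]; apply: nE; exists Y; split => //.
    by exists w.
  right.
  have gY : forall Y w, F Y -> Y w -> good Y.
    move=> Y w FY Yw; case: (FP _ FY) => // Y0; by rewrite Y0 in Yw.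
  have two : forall u v, (\bigcup_(X in F) X) u -> (\bigcup_(X in F) X) v ->
     exists Z, [/\ F Z, Z u & Z v].
    move=> u v [Y1 FY1 Y1u] [Y2 FY2 Y2v].
    case: (Ftot _ _ FY1 FY2) => sub.
      by exists Y2; split => //; apply: sub.
    by exists Y1; split => //; apply: sub.
  split.
  - by exists X0 => //; case: (gY _ _ FX0 Xz0).
  - move=> a x r y s Ux Uy; have [Z [FZ Zx Zy]] := two _ _ Ux Uy.
    by exists Z => //; case: (gY _ _ FZ Zx) => _ Zc _ _; apply: Zc.
  - move=> x r s Ux Uy; have [Z [FZ Zx Zy]] := two _ _ Ux Uy.
    by case: (gY _ _ FZ Zx) => _ _ Zf _; apply: Zf Zx Zy.
  - move=> x r [Z FZ Zx]; by case: (gY _ _ FZ Zx) => _ _ _ Zd; apply: Zd.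
have gA : good A.
  case: PA => // A0; exfalso.
  pose G0 := [set w | exists t, w = (t *: x0, t)].
  have gG0 : good G0.
    split.
    - by exists 1; rewrite scale1r.
    - move=> a x r y s [t1 [-> ->]] [t2 [-> ->]]; exists (a * t1 + t2).
      by rewrite scalerDl scalerA.
    - move=> x r s [t1 [e1 ->]] [t2 [e2 ->]].
      rewrite e1 in e2; apply: contrapT => /eqP nt.
      have : (t1 - t2) *: x0 = 0 by rewrite scalerBl e2 subrr.
      move/eqP; rewrite scaler_eq0 subr_eq0 (negbTE nt) /= => /eqP x00.
      have := px0 (p 0 + 1); rewrite x00 scaler0; lra.
    - by move=> x r [t [-> ->]]; apply: px0.
  apply: (Amax G0); last by right.
  rewrite A0; split => //; move=> /(_ (x0, 1)) H.
  have : (set0 : set (V * R)) (x0, 1) by apply: H; exists 1; rewrite scale1r.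
  by [].
case: (gA) => A1 Ac Af Ad.
have A00 := good0 gA.
have AZ := fun a x r (h : A (x, r)) => goodZ a gA h.
have tot : forall x, exists r, A (x, r).
  move=> x1; apply: contrapT => hx1.
  have key : forall y r y' r', A (y, r) -> A (y', r') ->
      r - p (y - x1) <= p (y' + x1) - r'.
    move=> y r y' r' Ay Ay'.
    have h1 := Ad _ _ (Ac 1 _ _ _ _ Ay Ay').
    rewrite scale1r mul1r in h1.
    have h2 := psub (y - x1) (y' + x1).
    have e : y - x1 + (y' + x1) = y + y'.
      by rewrite addrA addrAC subrK.
    rewrite e in h2; lra.
  pose E := [set z | exists y r, A (y, r) /\ z = r - p (y - x1)].
  have E0 : E !=set0 by exists (0 - p (0 - x1)); exists 0, 0.
  pose c := sup E.
  have c_ge : forall y r, A (y, r) -> r - p (y - x1) <= c.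
    move=> y r Ay; apply: ub_le_sup; last by exists y, r.
    exists (p (0 + x1) - 0) => z [y' [r' [Ay' ->]]]; exact: key.
  have c_le : forall y r, A (y, r) -> c <= p (y + x1) - r.
    move=> y r Ay; apply: ge_sup => // z [y' [r' [Ay' ->]]]; exact: key.
  pose B := [set w | exists y r t, A (y, r) /\ w = (y + t *: x1, r + t * c)].
  have AB : A `<=` B.
    case=> y r Ay; exists y, r, 0; split => //.
    by rewrite scale0r mul0r !addr0.
  have Bx1 : B (x1, c).
    by exists 0, 0, 1; split => //; rewrite scale1r mul1r !add0r.
  have gB : good B.
    split.
    - exact: AB.
    - move=> a x r y s [y1 [r1 [t1 [Ay1 [-> ->]]]]] [y2 [r2 [t2 [Ay2 [-> ->]]]]].
      exists (a *: y1 + y2), (a * r1 + r2), (a * t1 + t2); split; first exact: Ac.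
      congr (_, _); last by ring.
      by rewrite scalerDr scalerA scalerDl addrACA.
    - move=> x r s [y1 [r1 [t1 [Ay1 [e1 ->]]]]] [y2 [r2 [t2 [Ay2 [e2 ->]]]]].
      rewrite e1 in e2.
      case: (eqVneq t1 t2) => [et|nt].
        rewrite et in e2 *; have ey : y1 = y2 by apply: (addIr (t2 *: x1)).
        by rewrite ey in Ay1; rewrite (Af _ _ _ Ay1 Ay2).
      exfalso; apply: hx1.
      have e3 : (t1 - t2) *: x1 = y2 - y1.
        by rewrite scalerBl; apply: zmod_aux.
      have e4 : x1 = (t1 - t2)^-1 *: (y2 - y1).
        by rewrite -e3 scalerA mulVf ?scale1r // subr_eq0.
      exists ((t1 - t2)^-1 * (r2 - r1)); rewrite e4; apply: AZ.
      have := Ac (-1) _ _ _ _ Ay1 Ay2.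
      by rewrite scaleN1r mulN1r (addrC (- y1)) (addrC (- r1)).
    - move=> x r [y [r' [t [Ay [-> ->]]]]].
      case: (ltgtP t 0) => [tn|tp|->]; last by rewrite scale0r mul0r !addr0; apply: Ad.
      + pose s := - t.
        have sp : 0 < s by rewrite /s oppr_gt0.
        have h := c_ge _ _ (AZ s^-1 _ _ Ay).
        have e : y + t *: x1 = s *: (s^-1 *: y - x1).
          by rewrite scalerBr scalerA divff ?gt_eqF // scale1r /s scaleNr opprK.
        rewrite e phom //.
        have h2 := ler_wpM2l (ltW sp) h.
        rewrite mulrBr mulrA divff ?gt_eqF // mul1r in h2.
        have et : t = - s by rewrite /s opprK.
        rewrite et; lra.
      + have h := c_le _ _ (AZ t^-1 _ _ Ay).
        have e : y + t *: x1 = t *: (t^-1 *: y + x1).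
          by rewrite scalerDr scalerA divff ?gt_eqF // scale1r.
        rewrite e phom //.
        have h2 := ler_wpM2l (ltW tp) h.
        rewrite mulrBr mulrA divff ?gt_eqF // mul1r in h2.
        lra.
  apply: (Amax B); last by right.
  split => // BA; exact: hx1 (ex_intro _ c (BA _ Bx1)).
have [f Hf] := choice tot.
exists f; split.
- move=> a x y; apply: (Af (a *: x + y)) => //; exact: Ac.
- by move=> x; apply: Ad.
- by apply: (Af x0).
Qed.
End HB.

Unset Implicit Arguments.
Theorem proposition4p3 (R : realType)
  (X : completeNormedModType R) (leX : X -> X -> Prop)
  (M N : set X)
  (Y : completeNormedModType R) (leY : Y -> Y -> Prop) :
  is_banach_lattice leX ->
  is_banach_sublattice leX M -> is_banach_sublattice leX N ->
  (exists m, M m /\ m <> 0) -> (exists n, N n /\ n <> 0) ->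
  linfty_direct_sum M N ->
  positive_projections leX M N ->
  is_banach_lattice leY ->
  strictly_monotone leY ->
  BPBp_positive leX leY ->
  uniformly_monotone leY.
Proof.
move=> HX HM HN [mm [Mmm mm0]] [nn [Nnn nn0]] LD PP HY SMY BP.
have mk : forall (K : set X), is_banach_sublattice leX K -> forall z, K z -> z <> 0 ->
   exists z0, [/\ K z0, leX 0 z0 & `|z0| = 1].
  move=> K HK z Kz z0; pose a := absv HX z.
  have Ka : K a := sub_absv HK HX Kz.
  have na : `|a| = `|z| := norm_absv HX z.
  have np : 0 < `|a| by rewrite na normr_gt0; apply/eqP.
  exists (`|a|^-1 *: a); split.
  - have h := subMZ HK (`|a|^-1) Ka; exact: h.
  - have h0 : 0 <= `|a|^-1 by rewrite invr_ge0 ltW.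
    have h := le_scale0 HX h0 (absv_ge0 HX z); exact: h.
  - by rewrite normrZ ger0_norm ?invr_ge0 ?ltW // mulVf ?gt_eqF.
have [m0 [Mm0 m0p m01]] := mk M HM mm Mmm mm0.
have [n0 [Nn0 n0p n01]] := mk N HN nn Nnn nn0.
have mkf : forall z0, leX 0 z0 -> `|z0| = 1 -> exists f : X -> R,
   [/\ forall a x y, f (a *: x + y) = a * f x + f y, forall x, f x <= pn HX x & f z0 = 1].
  move=> z0 z0p z01; apply: hahn_banach.
  - exact: pn_sub.
  - by move=> t x tp; apply: pn_hom.
  - move=> t; case: (ltP 0 t) => tp; last by apply: le_trans tp _; exact: normr_ge0.
    by rewrite pn_hom // /pn posp_pos // z01 mulr1.
have [f [flin fle f1]] := mkf m0 m0p m01.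
have [g [glin gle g1]] := mkf n0 n0p n01.
pose F x := f (PM LD x).
pose G x := g (PN LD x).
have PMl := PM_lin HM HN LD.
have Flin : forall a x y, F (a *: x + y) = a * F x + F y.
  by move=> a x y; rewrite /F (proj1 (PMl a x y)) flin.
have Glin : forall a x y, G (a *: x + y) = a * G x + G y.
  by move=> a x y; rewrite /G (proj2 (PMl a x y)) glin.
have Fpos : forall x, leX 0 x -> 0 <= F x.
  move=> x hx; case: (dec_spec LD x) => h1 h2 e; have [hm _] := PP x _ _ h1 h2 e hx.
  have h := func_pos flin fle hm; exact: h.
have Gpos : forall x, leX 0 x -> 0 <= G x.
  move=> x hx; case: (dec_spec LD x) => h1 h2 e; have [_ hn] := PP x _ _ h1 h2 e hx.
  have h := func_pos glin gle hn; exact: h.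
have Fbd : forall x, `|F x| <= `|x|.
  move=> x; exact: le_trans (func_bd flin fle _) (PM_le LD x).
have Gbd : forall x, `|G x| <= `|x|.
  move=> x; exact: le_trans (func_bd glin gle _) (PN_le LD x).
have f0 := func0 flin.
have g0 := func0 glin.
have [PMm0 PNm0] : PM LD m0 = m0 /\ PN LD m0 = 0.
  by apply: dec_uniq => //; [exact: subM0 HN | rewrite addr0].
have [PMn0 PNn0] : PM LD n0 = 0 /\ PN LD n0 = n0.
  by apply: dec_uniq => //; [exact: subM0 HM | rewrite add0r].
have [PMmn PNmn] : PM LD (m0 + n0) = m0 /\ PN LD (m0 + n0) = n0.
  by apply: dec_uniq.
have Fm0 : F m0 = 1 by rewrite /F PMm0.
have Gm0 : G m0 = 0 by rewrite /G PNm0.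
have Fn0 : F n0 = 0 by rewrite /F PMn0.
have Gn0 : G n0 = 1 by rewrite /G PNn0.
have Fmn : F (m0 + n0) = 1 by rewrite /F PMmn.
have Gmn : G (m0 + n0) = 1 by rewrite /G PNmn.
apply: contrapT => nUM.
have [e0 [e0p He0]] : exists e0 : R, 0 < e0 /\ forall d : R, 0 < d ->
    exists x y : Y, [/\ `|x| = 1, leY 0 x, leY 0 y, `|x + y| <= 1 + d & e0 < `|y|].
  apply: contrapT => H; apply: nUM => eps epsp.
  apply: contrapT => H2; apply: H; exists eps; split => // d dp.
  apply: contrapT => H3; apply: H2; exists d; split => // x y x1 xp yp hxy.
  rewrite leNgt; apply/negP => hy; apply: H3; exists x, y; split => //.
pose eps := Num.min (e0 / 2) (1 / 2).
have he1 : eps <= e0 / 2 by rewrite /eps ge_min lexx.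
have he2 : eps <= 1 / 2 by rewrite /eps ge_min lexx orbT.
have epsp : 0 < eps by rewrite /eps lt_min; apply/andP; split; lra.
have eps01 : 0 < eps < 1 by apply/andP; split; lra.
have [eta [/andP [etap etaeps] Heta]] := BP eps eps01.
have [x [y [x1 xp yp hxy hy]]] := He0 eta etap.
pose k := `|x + y|.
have k1 : 1 <= k by rewrite -x1; have h := norm_mono HY xp (le_addpos HY x yp); exact: h.
have kp : 0 < k by lra.
have kip : 0 <= k^-1 by rewrite invr_ge0 ltW.
have kik : k^-1 * k = 1 by rewrite mulVf ?gt_eqF.
pose a := k^-1 *: x; pose b := k^-1 *: y.
have ap : leY 0 a by have h := le_scale0 HY kip xp; exact: h.
have bp : leY 0 b by have h := le_scale0 HY kip yp; exact: h.
have ab1 : `|a + b| = 1 by rewrite -scalerDr normrZ ger0_norm.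
pose S z := F z *: a + G z *: b.
have Slin : forall (al : R) z w, S (al *: z + w) = al *: S z + S w.
  move=> al z w; rewrite /S Flin Glin !scalerDl !scalerDr !scalerA.
  by rewrite addrACA.
have Sbl : bounded_linear S.
  split => //; exists (`|a| + `|b|) => z.
  apply: le_trans (ler_normD _ _) _; rewrite !normrZ.
  rewrite mulrDl; apply: lerD; rewrite [X in _ <= X]mulrC; apply: ler_wpM2r.
  - by rewrite mulr_ge0.
  - exact: Fbd.
  - by rewrite mulr_ge0.
  - exact: Gbd.
have Spos : positive_op leX leY S.
  move=> z hz; rewrite /S -[0](addr0 0).
  have h1 := le_scale0 HY (Fpos z hz) ap; have h2 := le_scale0 HY (Gpos z hz) bp.
  have h := le_add HY h1 h2; exact: h.
have mn1 : `|m0 + n0| = 1 by rewrite (dec_norm LD Mm0 Nn0) m01 n01 maxxx.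
have Snorm : opnorm S = 1.
  apply/eqP; rewrite eq_le; apply/andP; split.
  - apply: ge_sup; first by exists `|S 0|; exists 0; rewrite /= ?normr0 ?ler01.
    move=> _ [z hz <-]; rewrite /S -ab1; apply: (bound2 HY) => //.
      exact: le_trans (Fbd z) hz.
    exact: le_trans (Gbd z) hz.
  - have mn1' : `|m0 + n0| <= 1 by rewrite mn1.
    have h := opnorm_ub Sbl mn1'.
    by move: h; rewrite /S Fmn Gmn !scale1r ab1.
have Sm0 : S m0 = a by rewrite /S Fm0 Gm0 scale1r scale0r addr0.
have Sn0 : S n0 = b by rewrite /S Fn0 Gn0 scale1r scale0r add0r.
have hSm0 : 1 - eta < `|S m0|.
  rewrite Sm0 /a normrZ ger0_norm // x1 mulr1.
  have hk : k <= 1 + eta := hxy.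
  have h1 : (1 - eta) * k < k^-1 * k.
    rewrite kik; have : eta < 1 by lra.
    nra.
  by move: h1; rewrite ltr_pM2r.
have [u0 [T [u01 [Tbl [Tpos [Tnorm [Tu0 [hu0 hTS]]]]]]]] := Heta S m0 Sbl Spos Snorm m01 hSm0.
pose m1 := PM LD u0; pose n1 := PN LD u0.
have [hm1 hn1 eu0] := dec_spec LD u0.
have nm1 : `|m1| <= 1 by rewrite -u01; exact: PM_le.
have nn1 : `|n1| < eps.
  have e : u0 - m0 = (m1 - m0) + n1 by rewrite {1}eu0 addrAC.
  have hmm := subMB HM hm1 Mm0.
  have e2 := dec_norm LD hmm hn1.
  rewrite -e in e2; apply: le_lt_trans _ hu0; rewrite e2 le_max lexx orbT //.
have TSbl : bounded_linear (fun z => T z - S z).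
  split.
    move=> al z w; rewrite (linD Tbl) (linZ Tbl) Slin scalerBr opprD.
    by rewrite addrACA.
  case: Tbl => _ [c1 hk1]; case: Sbl => _ [c2 hk2]; exists (c1 + c2) => z.
  apply: le_trans (ler_normB _ _) _; rewrite mulrDl; apply: lerD; [exact: hk1|exact: hk2].
have n01' : `|n0| <= 1 by rewrite n01.
have hTn0 : `|T n0 - b| < eps.
  rewrite -Sn0; apply: le_lt_trans hTS.
  have h := opnorm_ub TSbl n01'; exact: h.
clear n01'.
have nb : eps <= `|b|.
  rewrite /b normrZ ger0_norm //.
  have hk : k <= 1 + eta := hxy.
  rewrite mulrC ler_pdivlMr //.
  have : eta < 1 by lra.
  nra.
have Tn0nz : T n0 <> 0.
  by move=> h; rewrite h sub0r normrN in hTn0; rewrite leNgt hTn0 in nb.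
pose w := absv HX m1 + absv HX n1.
pose v := w + (1 - eps) *: n0.
have eps1 : 0 <= 1 - eps by lra.
have eps1' : 0 < 1 - eps by lra.
have v1 : `|v| <= 1.
  have e : v = absv HX m1 + (absv HX n1 + (1 - eps) *: n0) by rewrite /v /w addrA.
  have hMa := sub_absv HM HX hm1.
  have hNa := sub_absv HN HX hn1.
  have hN2 := subMZ HN (1 - eps) Nn0.
  have hN3 := subMD HN hNa hN2.
  rewrite e (dec_norm LD hMa hN3) ge_max norm_absv nm1 /=.
  apply: le_trans (ler_normD _ _) _; rewrite norm_absv normrZ n01 mulr1 ger0_norm //.
  lra.
have Tv1 : `|T v| <= 1 by rewrite -Tnorm; have h := opnorm_ub Tbl v1; exact: h.
have w0 : leX 0 w.
  rewrite /w -[0](addr0 0); have h := le_add HX (absv_ge0 HX m1) (absv_ge0 HX n1); exact: h.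
have Tw0 : leY 0 (T w) by apply: Tpos.
have Tuw : `|T u0| <= `|T w|.
  apply: (norm_le_abs HY).
  - apply: (le_0sub HY); rewrite -(linB Tbl); apply: Tpos; apply: (le_sub0 HX).
    rewrite eu0; have h := le_add HX (absv_ge HX m1) (absv_ge HX n1); exact: h.
  - apply: (le_0sub HY); rewrite -(linN Tbl) -(linB Tbl); apply: Tpos; apply: (le_sub0 HX).
    rewrite eu0 opprD; have h := le_add HX (absv_geN HX m1) (absv_geN HX n1); exact: h.
have Tvw : `|T w| < `|T v|.
  rewrite /v (linD Tbl) (linZ Tbl); apply: SMY => //.
    have h := le_scale0 HY eps1 (Tpos n0 n0p); exact: h.
  move/eqP; rewrite scaler_eq0 => /orP [/eqP h|/eqP h].
    by rewrite h ltxx in eps1'.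
  exact: Tn0nz h.
have h2 := lt_le_trans Tvw Tv1.
have h3 := le_lt_trans Tuw h2.
by rewrite Tu0 ltxx in h3.
Qed.
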